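(* Let $\pi>0$, $\bar d>0$, $0<\theta_1<\dots<\theta_K$, $0\le\beta_1<\dots<\beta_M\le1$, and $A:[0,D]\to[0,\bar d]$. For $(Q,\Pi)\in[0,D]\times\mathbb{R}$ and a type $(\beta,\theta)$ let $\bar S(Q,\Pi,\beta,\theta)=\theta[\bar d-\beta A(Q)]-\pi(1-\beta)A(Q)-\Pi$. Then the smallest-payoff user type $\Lambda_\epsilon(Q,\Pi)\in\arg\min_{(\beta_m,\theta_k)}\bar S(Q,\Pi,\beta_m,\theta_k)$ does not depend on $(Q,\Pi)$: there is a single type among the $KM$ types $(\beta_m,\theta_k)$ that minimizes $\bar S(Q,\Pi,\cdot)$ for every $(Q,\Pi)\in[0,D]\times\mathbb{R}$.
   Context: Model: $\pi$ is the overage price, $\bar d$ the mean monthly data demand, $A(Q)$ the expected overage data consumption under data cap $Q$; $\bar S$ is the expected payoff of a type-$(\beta,\theta)$ user (data valuation $\theta$, network substitutability $\beta$) under a plan with cap $Q$ and subscription fee $\Pi$. *)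

(* Defs.v *)
From mathcomp Require Import all_boot all_order all_algebra.
Set Implicit Arguments. Unset Strict Implicit. Unset Printing Implicit Defensive.
Import Order.TTheory GRing.Theory Num.Theory.
Local Open Scope ring_scope.

Definition Sbar (R : realFieldType) (pi dbar : R) (A : R -> R)
  (Q Pi beta theta : R) : R :=
  theta * (dbar - beta * A Q) - pi * (1 - beta) * A Q - Pi.

(* Main.v *)
Require Import Defs.
From mathcomp Require Import all_boot all_order all_algebra.
From mathcomp Require Import lra.
Import Order.TTheory GRing.Theory Num.Theory.
Local Open Scope ring_scope.

Theorem lemma2 (R : realFieldType) (pi dbar D : R) (A : R -> R)
  (K M : nat) (theta : 'I_K -> R) (beta : 'I_M -> R) :
  0 < pi -> 0 < dbar ->
  (0 < K)%N -> (0 < M)%N ->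
  (forall k : 'I_K, 0 < theta k) ->
  (forall k k' : 'I_K, (k < k')%N -> theta k < theta k') ->
  (forall m : 'I_M, 0 <= beta m <= 1) ->
  (forall m m' : 'I_M, (m < m')%N -> beta m < beta m') ->
  (forall Q, 0 <= Q <= D -> 0 <= A Q <= dbar) ->
  exists (k0 : 'I_K) (m0 : 'I_M),
    forall Q Pi, 0 <= Q <= D ->
      forall (k : 'I_K) (m : 'I_M),
        Sbar pi dbar A Q Pi (beta m0) (theta k0)
          <= Sbar pi dbar A Q Pi (beta m) (theta k).
Proof.
move=> pi0 d0 K0 M0 th0 thI b01 bI HA.
pose k0 : 'I_K := Ordinal K0.
have M1 : (M.-1 < M)%N by rewrite prednK.
pose mlo : 'I_M := Ordinal M0.
pose mhi : 'I_M := Ordinal M1.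
have thle : forall k, theta k0 <= theta k.
  move=> k; case: (posnP k) => [e|p].
    by have -> : k = k0 by apply: val_inj.
  by apply: ltW; apply: thI.
have blo : forall m, beta mlo <= beta m.
  move=> m; case: (posnP m) => [e|p].
    by have -> : m = mlo by apply: val_inj.
  by apply: ltW; apply: bI.
have bhi : forall m, beta m <= beta mhi.
  move=> m; have : (m <= M.-1)%N by rewrite -ltnS prednK.
  rewrite leq_eqVlt => /orP [/eqP e|p].
    by have -> : m = mhi by apply: val_inj.
  by apply: ltW; apply: bI.
exists k0.
have step2 : forall m Q Pi, 0 <= Q <= D -> forall k,
    Sbar pi dbar A Q Pi (beta m) (theta k0)
      <= Sbar pi dbar A Q Pi (beta m) (theta k).
  move=> m Q Pi HQ k; rewrite /Sbar.
  have /andP [a0 a1] := HA Q HQ.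
  have /andP [b0 b1] := b01 m.
  have h1 : 0 <= (1 - beta m) * A Q by apply: mulr_ge0; lra.
  have h2 : 0 <= (theta k - theta k0) * (dbar - beta m * A Q).
    apply: mulr_ge0; first by have := thle k; lra.
    lra.
  lra.
case: (lerP (theta k0) pi) => hp.
- exists mlo => Q Pi HQ k m.
  apply: le_trans (step2 m Q Pi HQ k).
  have /andP [a0 a1] := HA Q HQ.
  have h : 0 <= (beta m - beta mlo) * ((pi - theta k0) * A Q).
    apply: mulr_ge0; first by have := blo m; lra.
    apply: mulr_ge0; lra.
  rewrite /Sbar; lra.
- exists mhi => Q Pi HQ k m.
  apply: le_trans (step2 m Q Pi HQ k).
  have /andP [a0 a1] := HA Q HQ.
  have h : 0 <= (beta mhi - beta m) * ((theta k0 - pi) * A Q).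
    apply: mulr_ge0; first by have := bhi m; lra.
    apply: mulr_ge0; lra.
  rewrite /Sbar; lra.
Qed.
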